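(* Let $F\colon[0,+\infty)^N\to[0,+\infty)$ be a continuous metric preserving function and let $(X_1,d_{X_1}),\dots,(X_N,d_{X_N})$ be complete metric spaces. Then $(X_1\times\cdots\times X_N,d_F)$ is complete.
   Context: A function $F\colon[0,+\infty)^N\to[0,+\infty)$ is metric preserving if for any metric spaces $(X_1,d_1),\dots,(X_N,d_N)$, $d_F((x_i),(x'_i)):=F(d_1(x_1,x'_1),\dots,d_N(x_N,x'_N))$ is a metric on $X_1\times\cdots\times X_N$. *)

(* Defs.v *)
From Stdlib Require Import Reals.
From Stdlib Require Vectors.Fin.
Open Scope R_scope.

Definition is_metric (X : Type) (d : X -> X -> R) : Prop :=
  (forall x y, 0 <= d x y) /\
  (forall x y, d x y = 0 <-> x = y) /\
  (forall x y, d x y = d y x) /\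
  (forall x y z, d x z <= d x y + d y z).

Definition nonneg_vec (N : nat) (v : Fin.t N -> R) : Prop :=
  forall i, 0 <= v i.

(* F : [0,+oo)^N -> [0,+oo) (only its values on [0,+oo)^N matter). *)
Definition maps_nonneg (N : nat) (F : (Fin.t N -> R) -> R) : Prop :=
  forall v, nonneg_vec N v -> 0 <= F v.

Definition prod_dist (N : nat) (X : Fin.t N -> Type)
  (d : forall i, X i -> X i -> R) (F : (Fin.t N -> R) -> R)
  (x y : forall i, X i) : R :=
  F (fun i => d i (x i) (y i)).

Definition metric_preserving (N : nat) (F : (Fin.t N -> R) -> R) : Prop :=
  forall (X : Fin.t N -> Type) (d : forall i, X i -> X i -> R),
    (forall i, is_metric (X i) (d i)) ->
    is_metric (forall i, X i) (prod_dist N X d F).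

(* Continuity of F on [0,+oo)^N (product topology = sup-norm topology). *)
Definition continuous_on_nonneg (N : nat) (F : (Fin.t N -> R) -> R) : Prop :=
  forall v, nonneg_vec N v ->
    forall eps, 0 < eps -> exists delta, 0 < delta /\
      forall w, nonneg_vec N w ->
        (forall i, Rabs (w i - v i) < delta) -> Rabs (F w - F v) < eps.

Definition cauchy_seq (X : Type) (d : X -> X -> R) (u : nat -> X) : Prop :=
  forall eps, 0 < eps -> exists M : nat,
    forall m n, (M <= m)%nat -> (M <= n)%nat -> d (u m) (u n) < eps.

Definition converges_to (X : Type) (d : X -> X -> R) (u : nat -> X) (l : X) : Prop :=
  forall eps, 0 < eps -> exists M : nat, forall n, (M <= n)%nat -> d (u n) l < eps.

Definition complete (X : Type) (d : X -> X -> R) : Prop :=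
  forall u, cauchy_seq X d u -> exists l, converges_to X d u l.

(* Main.v *)
Require Import Defs.
From Stdlib Require Import Reals Lra.
From Stdlib Require Vectors.Fin.
From Stdlib Require Import ClassicalEpsilon FunctionalExtensionality.
Open Scope R_scope.

Lemma fin_bound (N : nat) (f : Fin.t N -> nat) : exists M, forall i, (f i <= M)%nat.
Proof.
  induction N as [|n IH].
  - exists 0%nat. intro i. apply (Fin.case0 (fun _ => _) i).
  - destruct (IH (fun j => f (Fin.FS j))) as [M' HM'].
    exists (Nat.max (f Fin.F1) M'). intro i.
    apply (Fin.caseS' i (fun i => (f i <= Nat.max (f Fin.F1) M')%nat)).
    + apply Nat.le_max_l.
    + intro p. eapply Nat.le_trans; [apply HM'|apply Nat.le_max_r].
Qed.

Definition absd : R -> R -> R := fun x y => Rabs (x - y).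

Lemma absd_metric : is_metric R absd.
Proof.
  unfold absd; repeat split.
  - intros; apply Rabs_pos.
  - intros H. destruct (Req_dec (x - y) 0); [lra|].
    exfalso; apply Rabs_no_R0 in H0; contradiction.
  - intros ->. replace (y - y) with 0 by ring. apply Rabs_R0.
  - apply Rabs_minus_sym.
  - intros x y z. replace (x - z) with ((x - y) + (y - z)) by ring. apply Rabs_triang.
Qed.

Lemma F0 (N : nat) (F : (Fin.t N -> R) -> R) (HFmp : metric_preserving N F) :
  F (fun _ => 0) = 0.
Proof.
  destruct (HFmp (fun _ => R) (fun _ => absd) (fun _ => absd_metric)) as [_ [H _]].
  pose proof (proj2 (H (fun _ => 0) (fun _ => 0)) eq_refl) as H0.
  unfold prod_dist, absd in H0.
  replace (fun _ : Fin.t N => 0) with (fun i : Fin.t N => Rabs (0 - 0)); auto.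
  apply functional_extensionality; intro; replace (0-0) with 0 by ring; apply Rabs_R0.
Qed.

Section Star.
Variables eps t : R.
Definition hst (x : R) : R :=
  if Req_EM_T x 0 then eps/2 else if Req_EM_T x 2 then eps/2
  else if Req_EM_T x 1 then t - eps/2 else 1.
Definition Dst (x y : R) : R := if Req_EM_T x y then 0 else hst x + hst y.

Lemma Dst_metric : 0 < eps -> eps/2 <= t -> is_metric R Dst.
Proof.
  intros He Ht.
  assert (Hh : forall x, 0 <= hst x) by
    (intro x; unfold hst; repeat destruct Req_EM_T; lra).
  assert (Hp : forall x, x <> 1 -> 0 < hst x) by
    (intros x Hx; unfold hst; repeat destruct Req_EM_T; subst; lra).
  unfold Dst; split; [|split; [|split]].
  - intros x y; destruct Req_EM_T; [lra|]. pose proof (Hh x); pose proof (Hh y); lra.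
  - intros x y; split.
    + destruct Req_EM_T; auto. intro H. exfalso.
      destruct (Req_EM_T x 1).
      * assert (Hy : y <> 1) by (intro; subst; auto). pose proof (Hh x); pose proof (Hp y Hy); lra.
      * match goal with Hx : x <> 1 |- _ => pose proof (Hh y); pose proof (Hp x Hx); lra end.
    + intros ->; destruct Req_EM_T; [auto|contradiction].
  - intros x y; destruct (Req_EM_T x y), (Req_EM_T y x); subst; try lra; try contradiction.

  - intros x y z. pose proof (Hh x); pose proof (Hh y); pose proof (Hh z).
    destruct (Req_EM_T x z), (Req_EM_T x y), (Req_EM_T y z); subst; try lra; try contradiction.
Qed.
End Star.

Lemma key (N : nat) (F : (Fin.t N -> R) -> R)
  (HFnn : maps_nonneg N F) (HFmp : metric_preserving N F)
  (i : Fin.t N) (eps : R) (He : 0 < eps) :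
  let e := fun j => if Fin.eq_dec j i then eps else 0 in
  0 < F e /\ forall v, nonneg_vec N v -> eps/2 <= v i -> F e <= 2 * F v.
Proof.
  intro e.
  assert (Hen : nonneg_vec N e) by (intro j; unfold e; destruct Fin.eq_dec; lra).
  split.
  - destruct (HFmp (fun _ => R) (fun _ => Dst eps eps) (fun _ => Dst_metric eps eps He ltac:(lra)))
      as [_ [H _]].
    destruct (Rle_lt_or_eq_dec _ _ (HFnn e Hen)) as [|Hz]; auto. exfalso.
    pose (x := fun _ : Fin.t N => 0). pose (z := fun j : Fin.t N => if Fin.eq_dec j i then 2 else 0).
    assert (Hxz : prod_dist N (fun _ => R) (fun _ => Dst eps eps) F x z = F e).
    { unfold prod_dist. f_equal. apply functional_extensionality; intro j.
      unfold x, z, e, Dst, hst. destruct (Fin.eq_dec j i); repeat destruct Req_EM_T; lra. }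
    rewrite <- Hz in Hxz. apply (proj1 (H x z)) in Hxz.
    assert (x i = z i) by (rewrite Hxz; auto). unfold x, z in H0.
    destruct (Fin.eq_dec i i); [lra|auto].
  - intros v Hv Hvi.
    pose (d := fun j : Fin.t N => if Fin.eq_dec j i then Dst eps (v i) else absd).
    assert (Hd : forall j, is_metric R (d j)).
    { intro j; unfold d; destruct Fin.eq_dec. apply Dst_metric; auto. apply absd_metric. }
    destruct (HFmp (fun _ => R) d Hd) as [_ [_ [Hs Ht]]].
    pose (x := fun _ : Fin.t N => 0).
    pose (y := fun j : Fin.t N => if Fin.eq_dec j i then 1 else v j).
    pose (z := fun j : Fin.t N => if Fin.eq_dec j i then 2 else 0).
    specialize (Ht x y z).
    assert (E1 : prod_dist N (fun _ => R) d F x z = F e).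
    { unfold prod_dist. f_equal. apply functional_extensionality; intro j.
      unfold d, x, z, e, absd, Dst, hst. destruct (Fin.eq_dec j i).
      repeat destruct Req_EM_T; lra. replace (0-0) with 0 by ring; apply Rabs_R0. }
    assert (E2 : prod_dist N (fun _ => R) d F x y = F v).
    { unfold prod_dist. f_equal. apply functional_extensionality; intro j.
      unfold d, x, y, absd, Dst, hst. destruct (Fin.eq_dec j i).
      subst; repeat destruct Req_EM_T; lra. rewrite Rabs_minus_sym, Rminus_0_r.
      apply Rabs_pos_eq, Hv. }
    assert (E3 : prod_dist N (fun _ => R) d F y z = F v).
    { unfold prod_dist. f_equal. apply functional_extensionality; intro j.
      unfold d, z, y, absd, Dst, hst. destruct (Fin.eq_dec j i).
      subst; repeat destruct Req_EM_T; lra. rewrite Rminus_0_r.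
      apply Rabs_pos_eq, Hv. }
    lra.
Qed.

Theorem mainTheorem20 (N : nat) (F : (Fin.t N -> R) -> R)
  (HFnn : maps_nonneg N F)
  (HFc : continuous_on_nonneg N F)
  (HFmp : metric_preserving N F)
  (X : Fin.t N -> Type) (d : forall i, X i -> X i -> R)
  (Hmet : forall i, is_metric (X i) (d i))
  (Hcomp : forall i, complete (X i) (d i)) :
  complete (forall i, X i) (prod_dist N X d F).
Proof.
  intros u Hu.
  assert (Hci : forall i, cauchy_seq (X i) (d i) (fun n => u n i)).
  { intros i eps He.
    destruct (key N F HFnn HFmp i eps He) as [Hpos Hle].
    destruct (Hu (F (fun j => if Fin.eq_dec j i then eps else 0) / 2) ltac:(lra)) as [M HM].
    exists M. intros m n Hm Hn. specialize (HM m n Hm Hn). unfold prod_dist in HM.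
    destruct (Rlt_or_le (d i (u m i) (u n i)) eps) as [|Hge]; auto. exfalso.
    assert (Hnn : nonneg_vec N (fun j => d j (u m j) (u n j))) by (intro j; apply (Hmet j)).
    specialize (Hle _ Hnn ltac:(simpl; lra)). lra. }
  assert (Hl : forall i, {l : X i | converges_to (X i) (d i) (fun n => u n i) l}).
  { intro i. apply constructive_indefinite_description. apply Hcomp, Hci. }
  exists (fun i => proj1_sig (Hl i)).
  intros eps He.
  assert (H0n : nonneg_vec N (fun _ => 0)) by (intro; lra).
  destruct (HFc _ H0n eps He) as [delta [Hd Hc]].
  assert (HM : forall i, {M : nat | forall n, (M <= n)%nat -> d i (u n i) (proj1_sig (Hl i)) < delta}).
  { intro i. apply constructive_indefinite_description. apply (proj2_sig (Hl i)), Hd. }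
  destruct (fin_bound N (fun i => proj1_sig (HM i))) as [M HMb].
  exists M. intros n Hn. unfold prod_dist.
  assert (Hwn : nonneg_vec N (fun j => d j (u n j) (proj1_sig (Hl j)))) by (intro j; apply (Hmet j)).
  assert (Hw : forall i, Rabs (d i (u n i) (proj1_sig (Hl i)) - 0) < delta).
  { intro i. rewrite Rminus_0_r, Rabs_pos_eq by apply (Hmet i).
    apply (proj2_sig (HM i)). eapply Nat.le_trans; [apply HMb|exact Hn]. }
  specialize (Hc _ Hwn Hw). rewrite (F0 N F HFmp), Rminus_0_r in Hc.
  pose proof (HFnn _ Hwn). rewrite Rabs_pos_eq in Hc; auto.
Qed.
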